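(* Let $T$ be a spanning tree and $\tau=\sum_{(i,j)\in T}\frac{r(i,j)}{R(C(i,j))}$. For any probability distribution over $\mathbf x\in\mathbb R^V$ such that $\mathbb E_{\mathbf x}[\mathcal B(\mathbf x)]\ge(1-\frac\epsilon\tau)\mathcal B(\mathbf x^* )$, we have $\mathbb E_{\mathbf x}[\mathcal E(\mathbf f_{T,\mathbf x})]\le(1+\epsilon)\mathcal E(\mathbf f^* )$.
   Context: $G=(V,E)$ is a connected undirected graph with resistances $r(e)>0$ and fixed orientation $\vec E$; $\mathbf b\in\mathbb R^V$ with $\sum_ib(i)=0$; a $\mathbf b$-flow has net outflow $b(i)$ at every $i$ (with $f(j,i)=-f(i,j)$). $\mathcal E(\mathbf f)=\frac12\sum_er(e)f(e)^2$, $\mathbf f^*$ is the minimum-energy $\mathbf b$-flow; $\mathbf L=\sum_{ij\in E}\frac1{r(i,j)}(\mathbf e_i-\mathbf e_j)(\mathbf e_i-\mathbf e_j)^\top$, $\mathcal B(\mathbf x)=\mathbf b^\top\mathbf x-\frac12\mathbf x^\top\mathbf L\mathbf x$, and $\mathbf x^*$ maximizes $\mathcal B$. $T$ is rooted with edges directed toward the root; $C(i,j)$ is the vertex set of the component of $T-ij$ containing $i$; $R(C)=(\sum_{e\in\delta(C)}1/r(e))^{-1}$ where $\delta(C)$ is the set of edges with exactly one endpoint in $C$. The tree-defined flow $\mathbf f_{T,\mathbf x}$ equals $\frac{x(i)-x(j)}{r(i,j)}$ on non-tree edges and on tree edges takes the unique values making it a $\mathbf b$-flow. *)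

(* Defs.v *)
From HB Require Import structures.
From mathcomp Require Import all_boot all_order all_algebra.
From mathcomp Require Import all_classical all_reals all_analysis.
Set Implicit Arguments. Unset Strict Implicit. Unset Printing Implicit Defensive.
Import Order.TTheory GRing.Theory Num.Theory.
Local Open Scope ring_scope.

(* Graph: vertex set 'I_n, finite edge type E, each edge e oriented from
   tl e to hd e (the fixed orientation), resistances r : E -> R. *)
Section Graph.
Variables (R : realType) (n : nat) (E : finType) (tl hd : E -> 'I_n).

Definition adjS (S : {set E}) : rel 'I_n :=
  fun u v => [exists e in S, ((tl e == u) && (hd e == v)) || ((tl e == v) && (hd e == u))].

Definition connected_graph : Prop := forall u v, connect (adjS [set: E]) u v.

(* T is a spanning tree: connected on all vertices, and acyclic
   (every tree edge is a bridge of T). *)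
Definition spanning_tree (T : {set E}) : Prop :=
  (forall u v, connect (adjS T) u v) /\
  (forall e, e \in T -> ~~ connect (adjS (T :\ e)) (tl e) (hd e)).

Definition compC (T : {set E}) (e : E) : {set 'I_n} :=
  [set v | connect (adjS (T :\ e)) (tl e) v].

Definition cut (C : {set 'I_n}) : {set E} :=
  [set e | (tl e \in C) != (hd e \in C)].

Definition effR (r : E -> R) (C : {set 'I_n}) : R :=
  (\sum_(e in cut C) (r e)^-1)^-1.

Definition tau (r : E -> R) (T : {set E}) : R :=
  \sum_(e in T) r e / effR r (compC T e).

Definition is_bflow (b : 'cV[R]_n) (f : E -> R) : Prop :=
  forall v : 'I_n,
    \sum_(e | tl e == v) f e - \sum_(e | hd e == v) f e = b v 0.

Definition energy (r : E -> R) (f : E -> R) : R :=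
  2^-1 * \sum_e r e * f e ^+ 2.

Definition lap (r : E -> R) : 'M[R]_n :=
  \sum_e (r e)^-1 *:
     ((delta_mx (tl e) (0 : 'I_1) - delta_mx (hd e) 0) *m
      (delta_mx (tl e) (0 : 'I_1) - delta_mx (hd e) 0)^T).

Definition Bfun (r : E -> R) (b x : 'cV[R]_n) : R :=
  (b^T *m x) 0 0 - 2^-1 * (x^T *m lap r *m x) 0 0.

Definition is_tree_flow (r : E -> R) (b : 'cV[R]_n) (T : {set E})
    (x : 'cV[R]_n) (f : E -> R) : Prop :=
  is_bflow b f /\ forall e, e \notin T -> f e = (x (tl e) 0 - x (hd e) 0) / r e.

End Graph.

(* Main.v *)
Set Warnings "-all".
Require Import Defs.
From HB Require Import structures.
From mathcomp Require Import all_boot all_order all_algebra.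
From mathcomp Require Import all_classical all_reals all_analysis.
From mathcomp Require Import ring lra.
Import Order.TTheory GRing.Theory Num.Theory.
Local Open Scope ring_scope.

Section Alg.
Variables (R : realType) (n : nat) (E : finType) (tl hd : E -> 'I_n).
Variables (r : E -> R) (b : 'cV[R]_n).
Hypothesis rpos : forall e, 0 < r e.

Definition pd (x : 'cV[R]_n) e := x (tl e) 0 - x (hd e) 0.

Lemma quad_lap x : (x^T *m lap tl hd r *m x) 0 0 = \sum_e (pd x e)^+2 / r e.
Proof.
rewrite /lap mulmx_sumr mulmx_suml summxE; apply: eq_bigr => e _.
rewrite -scalemxAr -scalemxAl mxE mulmxA -mulmxA.
set v := (delta_mx (tl e) 0 - delta_mx (hd e) 0 : 'cV[R]_n).
have h1 : (x^T *m v) = (pd x e)%:M.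
  apply/matrixP => i j; rewrite !ord1 /v mulmxBr -!colE !mxE /pd //.
have h2 : (v^T *m x) = (pd x e)%:M.
  by rewrite -[x]trmxK -trmx_mul h1 trmxK tr_scalar_mx.
rewrite !mulmxA h1 -mulmxA h2 mul_scalar_mx !mxE /= mulr1n.
by rewrite mulrC expr2.
Qed.

Lemma lin_b f x : is_bflow tl hd b f -> (b^T *m x) 0 0 = \sum_e f e * pd x e.
Proof.
move=> hf.
have -> : (b^T *m x) 0 0 = \sum_v b v 0 * x v 0.
  by rewrite mxE; apply: eq_bigr => v _; rewrite mxE.
under eq_bigr => v _ do rewrite -hf mulrBl !mulr_suml.
rewrite sumrB.
have key : forall (h : E -> 'I_n), \sum_v \sum_(e | h e == v) f e * x v 0 = \sum_e f e * x (h e) 0.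
  move=> h; rewrite (exchange_big_dep predT) //=; apply: eq_bigr => e _.
  by rewrite (big_pred1 (h e)) // => v; rewrite eq_sym.
rewrite !key -sumrB; apply: eq_bigr => e _; rewrite /pd; ring.
Qed.

Lemma Bfun_gap f x : is_bflow tl hd b f ->
  Bfun tl hd r b x = energy r f - 2^-1 * \sum_e r e * (f e - pd x e / r e)^+2.
Proof.
move=> hf; rewrite /Bfun quad_lap (lin_b f x hf) /energy.
have -> : \sum_e r e * (f e - pd x e / r e)^+2 =
   \sum_e r e * f e ^+ 2 - 2 * \sum_e f e * pd x e + \sum_e pd x e ^+ 2 / r e.
  rewrite mulr_sumr -sumrB -big_split /=; apply: eq_bigr => e _.
  have := rpos e; rewrite lt0r => /andP[r0 _]; field.
  by [].
by field.
Qed.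


Lemma weak_dual f x : is_bflow tl hd b f -> Bfun tl hd r b x <= energy r f.
Proof.
move=> hf; rewrite (Bfun_gap f x hf) lerBlDr lerDl mulr_ge0 // ?invr_ge0 ?ler0n //.
by apply: sumr_ge0 => e _; rewrite mulr_ge0 // ?sqr_ge0 // ltW.
Qed.

Section Edge.
Variables (T : {set E}) (sp : spanning_tree tl hd T).
Variable (e : E) (eT : e \in T).
Let C := compC tl hd T e.
Let s e' : R := (tl e' \in C)%:R - (hd e' \in C)%:R.
Let S := \sum_(e' in Defs.cut tl hd C) (r e')^-1.

Lemma tlC : tl e \in C.
Proof. by rewrite inE connect0. Qed.

Lemma hdC : hd e \notin C.
Proof. by rewrite inE; case: sp => _ /(_ e eT). Qed.

Lemma s_e : s e = 1.
Proof. by rewrite /s tlC (negbTE hdC) subr0. Qed.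

Lemma s_other e' : e' \in T -> e' != e -> s e' = 0.
Proof.
move=> e'T ne.
have a1 : adjS tl hd (T :\ e) (tl e') (hd e').
  by apply/existsP; exists e'; rewrite !inE ne e'T !eqxx.
have a2 : adjS tl hd (T :\ e) (hd e') (tl e').
  by apply/existsP; exists e'; rewrite !inE ne e'T !eqxx orbT.
suff h : (tl e' \in C) = (hd e' \in C) by rewrite /s h subrr.
rewrite !inE; apply/idP/idP => h.
  exact: connect_trans h (connect1 a1).
exact: connect_trans h (connect1 a2).
Qed.

Lemma S_eq : S = \sum_e' s e' ^+ 2 / r e'.
Proof.
rewrite /S big_mkcond; apply: eq_bigr => e' _; rewrite /s inE.
case: (tl e' \in C); case: (hd e' \in C) => /=;
  by rewrite ?subrr ?subr0 ?sub0r ?sqrrN ?expr1n ?expr0n ?mul0r ?mul1r.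
Qed.

Lemma S_pos : 0 < S.
Proof.
rewrite /S (bigD1 e) /=; last by rewrite inE tlC (negbTE hdC).
by rewrite ltr_wpDr ?invr_gt0 // sumr_ge0 // => e' _; rewrite invr_ge0 ltW.
Qed.

Lemma edge_bound f x Bs : is_bflow tl hd b f ->
  (forall e', e' \notin T -> f e' = pd x e' / r e') ->
  (forall y, Bfun tl hd r b y <= Bs) ->
  (f e - pd x e / r e)^+2 <= 2 * S * (Bs - Bfun tl hd r b x).
Proof.
move=> hf hoff hBs.
set a := fun e' => f e' - pd x e' / r e'.
have F1 : \sum_e' s e' * a e' = a e.
  rewrite (bigD1 e) //= s_e mul1r big1 ?addr0 // => e' ne.
  case: (boolP (e' \in T)) => h; first by rewrite s_other ?mul0r.
  by rewrite /a hoff // subrr mulr0.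
pose chi : 'cV[R]_n := \col_i ((i \in C)%:R).
pose y al := x + al *: chi.
have pdy al e' : pd (y al) e' = pd x e' + al * s e'.
  by rewrite /pd /y /s !mxE; ring.
have By al : Bfun tl hd r b (y al) = Bfun tl hd r b x + al * a e - 2^-1 * al ^+ 2 * S.
  rewrite !(Bfun_gap f _ hf) -F1 S_eq.
  have -> : \sum_e' r e' * (f e' - pd (y al) e' / r e') ^+ 2 =
    \sum_e' r e' * (f e' - pd x e' / r e') ^+ 2 - 2 * al * \sum_e' s e' * a e'
     + al ^+ 2 * \sum_e' s e' ^+ 2 / r e'.
    rewrite !mulr_sumr -sumrB -big_split /=; apply: eq_bigr => e' _.
    rewrite pdy /a; have := rpos e'; rewrite lt0r => /andP[r0 _]; by field.
  by field.
have Spos := S_pos.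
have := hBs (y (a e / S)); rewrite By => h.
have h2 : 2^-1 * a e ^+ 2 / S <= Bs - Bfun tl hd r b x.
  move: h; rewrite -addrA; have -> : a e / S * a e - 2^-1 * (a e / S) ^+ 2 * S = 2^-1 * a e ^+ 2 / S.
    by field; rewrite gt_eqF.
  by rewrite -lerBrDl.
have -> : a e ^+ 2 = 2 * S * (2^-1 * a e ^+ 2 / S) by field; rewrite gt_eqF.
by rewrite ler_pM2l // mulr_gt0.
Qed.

End Edge.

Lemma tree_bound T f x Bs : spanning_tree tl hd T -> is_bflow tl hd b f ->
  (forall e', e' \notin T -> f e' = pd x e' / r e') ->
  (forall y, Bfun tl hd r b y <= Bs) ->
  energy r f <= Bfun tl hd r b x + tau tl hd r T * (Bs - Bfun tl hd r b x).
Proof.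
move=> sp hf hoff hBs.
have hg := Bfun_gap f x hf.
set Bx := Bfun tl hd r b x in hg *.
set G := \sum_e r e * (f e - pd x e / r e) ^+ 2 in hg.
have -> : energy r f = Bx + 2^-1 * G by rewrite hg; ring.
rewrite lerD2l /G (bigID (mem T)) /= [X in _ + X]big1 ?addr0; last first.
  by move=> e /hoff ->; rewrite subrr expr0n /= mulr0.
rewrite /tau mulr_sumr mulr_suml; apply: ler_sum => e eT.
have := (@edge_bound _ sp _ eT f x Bs hf hoff hBs).
rewrite /effR invrK /Bx => h.
have r0 := rpos e.
set S' := \sum_(e' in _) _ in h *.
set a2 := _ ^+ 2 in h *.
set D := Bs - _ in h *.
nra.
Qed.


Lemma tau_ge1 T : spanning_tree tl hd T -> T != finset.set0 -> 1 <= tau tl hd r T.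
Proof.
move=> sp /set0Pn [e0 e0T]; rewrite /tau (bigD1 e0) //=.
apply: le_trans (_ : r e0 / effR tl hd r (compC tl hd T e0) <= _).
  rewrite /effR invrK (bigD1 e0) /=; last by rewrite inE (@tlC T e0) (negbTE (@hdC T sp e0 e0T)).
  rewrite mulrDr mulfV ?gt_eqF // lerDl; apply: mulr_ge0; first exact: ltW.
  by apply: sumr_ge0 => e' _; rewrite invr_ge0 ltW.
rewrite lerDl; apply: sumr_ge0 => e /andP[eT _].
by rewrite /effR invrK mulr_ge0 ?ltW // (@S_pos T sp e eT).
Qed.

Lemma Bfun_expl x : Bfun tl hd r b x =
  \sum_v b v 0 * x v 0 - 2^-1 * \sum_e (pd x e * pd x e) * (r e)^-1.
Proof.
rewrite /Bfun quad_lap; congr (_ - 2^-1 * _).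
  by rewrite mxE; apply: eq_bigr => v _; rewrite mxE.
Qed.

Lemma energy_ge0 f : 0 <= energy r f.
Proof.
rewrite /energy mulr_ge0 ?invr_ge0 ?ler0n //.
by apply: sumr_ge0 => e _; rewrite mulr_ge0 ?sqr_ge0 // ltW.
Qed.

End Alg.

Section Meas.
Variable R : realType.
Local Open Scope ereal_scope.

Lemma le_int_nm d (T : measurableType d) (mu : {measure set T -> \bar R}) (f1 f2 : T -> \bar R) :
 (forall x, 0 <= f1 x) -> (forall x, f1 x <= f2 x) -> \int[mu]_x f1 x <= \int[mu]_x f2 x.
Proof.
move=> f10 f12.
have f20 : forall x, 0 <= f2 x by move=> x; exact: le_trans (f12 x).
rewrite !ge0_integralTE //; apply: ereal_sup_le => _ /= [h hf <-].
by exists h => //= x; exact: le_trans (hf x) (f12 x).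
Qed.


Lemma integrable_ub d (T : measurableType d) (P : probability T R) (g : T -> R) (Bs K : R) :
  measurable_fun setT g -> (forall w, (g w <= Bs)%R) ->
  K%:E <= \int[P]_w (g w)%:E -> P.-integrable setT (EFin \o g).
Proof.
move=> mg gB hK.
have mgE := (proj2 (measurable_realfun.measurable_EFinP _ _) mg).
have mp := measurable_realfun.measurable_funepos mgE.
have mn := measurable_realfun.measurable_funeneg mgE.
have hp : \int[P]_w (EFin \o g)^\+ w <= (Num.max Bs 0%R)%:E.
  apply: le_trans (_ : \int[P]_w (cst (Num.max Bs 0%R)%:E) w <= _).
    apply: ge0_le_integral => // w _.
    rewrite funeposE /= ge_max; apply/andP; split.
      by rewrite lee_fin le_max gB.
    by rewrite lee_fin le_max lexx orbT.
  rewrite integral_cst //=. by rewrite probability_setT mule1.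
have p0 : 0 <= \int[P]_w (EFin \o g)^\+ w by apply: integral_ge0 => w _.
have n0 : 0 <= \int[P]_w (EFin \o g)^\- w by apply: integral_ge0 => w _.
have pfin : \int[P]_w (EFin \o g)^\+ w \is a fin_num.
  by rewrite ge0_fin_numE // (le_lt_trans hp) // ltry.
have nfin : \int[P]_w (EFin \o g)^\- w < +oo.
  rewrite ltNge leye_eq; apply/negP => /eqP ninf.
  move: hK; rewrite integralE /= ninf /= addeNy leeNy_eq.
  by [].

apply/integrableP; split => //.
rewrite (_ : (fun w => `|(g w)%:E|) = (EFin \o g)^\+ \+ (EFin \o g)^\-); last first.
  by rewrite -fune_abse.
rewrite ge0_integralD //; try by move=> w _.
apply: lte_add_pinfty => //; exact: le_lt_trans hp (ltry _).
Qed.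


Lemma meas_part d (T : measurableType d) (P : probability T R) (g en : T -> R) (Bs tau eps : R) :
  measurable_fun setT g -> (forall w, (g w <= Bs)%R) -> (1 <= tau)%R ->
  (forall w, (0 <= en w)%R) -> (forall w, (en w <= g w + tau * (Bs - g w))%R) ->
  ((1 - eps / tau) * Bs)%:E <= \int[P]_w (g w)%:E ->
  \int[P]_w (en w)%:E <= ((1 + eps) * Bs)%:E.
Proof.
move=> mg gB t1 en0 enB hK.
have ig := @integrable_ub _ _ P g Bs _ mg gB hK.
have fin := integrable_fin_num measurableT ig.
set Ig := fine (\int[P]_w (g w)%:E).
have IgE : \int[P]_w (g w)%:E = Ig%:E by rewrite fineK.
have icst : forall k : R, P.-integrable setT (EFin \o cst k).
  by move=> k; apply: finite_measure_integrable_cst.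
have cstE : forall k : R, \int[P]_w (EFin \o cst k) w = k%:E.
  move=> k; change (\int[P]_w (cst k%:E) w = k%:E).
  rewrite integral_cst //=. by rewrite probability_setT mule1.
have IgB : (Ig <= Bs)%R.
  rewrite -lee_fin -IgE -(cstE Bs).
  apply: le_integral => // w _ /=; rewrite lee_fin; exact: gB.
have hK' : ((1 - eps / tau) * Bs <= Ig)%R by rewrite -lee_fin -IgE.
pose h w := (tau * Bs - (tau - 1) * g w)%R.
apply: le_trans (@le_int_nm _ _ P _ (fun w => (h w)%:E) _ _) _.
- by move=> w; rewrite lee_fin.
- move=> w; rewrite lee_fin /h; apply: le_trans (enB w) _.
  by rewrite le_eqVlt; apply/orP; left; apply/eqP; ring.
have ig2 : P.-integrable setT (EFin \o (fun w => (tau - 1) * g w)%R).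
  apply: eq_integrable (integrableZl measurableT (tau - 1) ig) => // w _.
rewrite /h.
under eq_integral do rewrite EFinB.
rewrite (integralB_EFin measurableT (icst (tau * Bs)%R) ig2).
have -> : \int[P]_w (cst (tau * Bs)%R w)%:E = (tau * Bs)%:E by exact: cstE.
under eq_integral do rewrite EFinM.
rewrite (integralZl measurableT ig) IgE -EFinM -EFinB lee_fin.
have tau0 : (0 < tau)%R by lra.
set q := (eps / tau)%R in hK'.
have -> : eps = (q * tau)%R by rewrite /q divfK // gt_eqF.
have qB : (0 <= q * Bs)%R by nra.
nra.
Qed.

End Meas.

Theorem mainTheorem16 (R : realType) (n : nat) (E : finType) (tl hd : E -> 'I_n)
    (r : E -> R) (b : 'cV[R]_n) (T : {set E})
    (fstar : E -> R) (xstar : 'cV[R]_n)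
    (d : measure_display) (Omega : measurableType d) (P : probability Omega R)
    (X : Omega -> 'cV[R]_n) (F : 'cV[R]_n -> E -> R) (eps : R) :
  (forall e, tl e != hd e) ->
  (forall e, 0 < r e) ->
  connected_graph tl hd ->
  \sum_(v < n) b v 0 = 0 ->
  (* f* is the minimum-energy b-flow *)
  is_bflow tl hd b fstar ->
  (forall f, is_bflow tl hd b f -> energy r fstar <= energy r f) ->
  (* x* maximizes B *)
  (forall x, Bfun tl hd r b x <= Bfun tl hd r b xstar) ->
  spanning_tree tl hd T ->
  (* F x is the tree-defined flow f_{T,x} *)
  (forall x, is_tree_flow tl hd r b T x (F x)) ->
  (* X is a random vector (each coordinate measurable) *)
  (forall i : 'I_n, measurable_fun setT (fun w => X w i 0)) ->
  (\int[P]_w (Bfun tl hd r b (X w))%:E >=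
     ((1 - eps / tau tl hd r T) * Bfun tl hd r b xstar)%:E)%E ->
  (\int[P]_w (energy r (F (X w)))%:E <= ((1 + eps) * energy r fstar)%:E)%E.
Proof.
move=> neq rpos conn bsum hfs hmin hxs sp hF mX hint.
set Bs := Bfun tl hd r b xstar in hint hxs *.
have ptw x : energy r (F x) <= Bfun tl hd r b x + tau tl hd r T * (Bs - Bfun tl hd r b x).
  exact: (@tree_bound R n E tl hd r b rpos T (F x) x Bs sp (hF x).1 (hF x).2 hxs).
have EsB : energy r fstar = Bs.
  apply/le_anti/andP; split.
    apply: le_trans (hmin _ (hF xstar).1) _; apply: le_trans (ptw xstar) _.
    by rewrite subrr mulr0 addr0.
  exact: (@weak_dual R n E tl hd r b rpos fstar xstar hfs).
rewrite EsB.
have [T0|Tn0] := eqVneq T finset.set0.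
  have noE : E -> False.
    move=> e; case: sp => c _; move: (c (tl e) (hd e)); rewrite T0.
    move/connectP => [p pth lst]; case: p pth lst => [|z p] /=.
      by move=> _ h; move: (neq e); rewrite h eqxx.
    by case/andP => /existsP [e' /andP []]; rewrite inE.
  have en0 : forall f, energy r f = 0.
    by move=> f; rewrite /energy big1 ?mulr0 // => e; case: (noE e).
  rewrite -EsB en0 mulr0.
  under eq_integral do rewrite en0.
  by rewrite integral0.
apply: (@meas_part R d Omega P (fun w => Bfun tl hd r b (X w)) (fun w => energy r (F (X w))) Bs (tau tl hd r T) eps) => //.
- have -> : (fun w => Bfun tl hd r b (X w)) = fun w =>
     \sum_v b v 0 * X w v 0 - 2^-1 * \sum_e (@pd R n E tl hd (X w) e * @pd R n E tl hd (X w) e) * (r e)^-1.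
    by apply: funext => w; rewrite Bfun_expl.
  have pdm e : measurable_fun setT (fun w => @pd R n E tl hd (X w) e).
    exact: measurable_realfun.measurable_funB.
  apply: measurable_realfun.measurable_funB.
    apply: measurable_sum => v; apply: measurable_realfun.measurable_funM => //.
  apply: measurable_realfun.measurable_funM => //.
  apply: measurable_sum => e; apply: measurable_realfun.measurable_funM => //.
  exact: measurable_realfun.measurable_funM.
- exact: (@tau_ge1 R n E tl hd r rpos T sp Tn0).
- by move=> w; exact: energy_ge0.
Qed.
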